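(* Let $k\ge 1$ and let $G$ be a graph with minimum degree at least $k$ and maximum degree $\Delta(G)$. Let $\Omega$ be a total $k$-coalition partition of $G$ of maximum cardinality $\mathrm{TC}_k(G)$. Then every $A\in\Omega$ forms a total $k$-coalition with at most $\Delta(G)-k+1$ sets in $\Omega$.
   Context: All graphs are finite, simple and connected. $N(v)$ denotes the open neighborhood of $v$. For a graph $G$ with $\delta(G)\ge k$, a set $S\subseteq V(G)$ is a total $k$-dominating set if $|N(v)\cap S|\ge k$ for every $v\in V(G)$. Two disjoint sets $U,W\subseteq V(G)$ form a total $k$-coalition if neither is a total $k$-dominating set but $U\cup W$ is. A total $k$-coalition partition of $G$ is a partition $\Omega$ of $V(G)$ in which every set forms a total $k$-coalition with some other set of $\Omega$; $\mathrm{TC}_k(G)$ is the maximum cardinality of such a partition. *)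

(* Defs.v *)
From mathcomp Require Import all_boot.
Set Implicit Arguments. Unset Strict Implicit. Unset Printing Implicit Defensive.

Definition simple_graph (T : finType) (e : rel T) : Prop :=
  irreflexive e /\ symmetric e.
Definition connected_graph (T : finType) (e : rel T) : Prop :=
  forall x y : T, connect e x y.

Definition nbhd (T : finType) (e : rel T) (v : T) : {set T} := [set u | e v u].
Definition deg (T : finType) (e : rel T) (v : T) : nat := #|nbhd e v|.
Definition min_deg_ge (T : finType) (e : rel T) (k : nat) : Prop :=
  forall v : T, k <= deg e v.
Definition max_deg (T : finType) (e : rel T) : nat := \max_(v : T) deg e v.

Definition total_kdom (T : finType) (e : rel T) (k : nat) (S : {set T}) : bool :=
  [forall v : T, k <= #|nbhd e v :&: S|].

Definition tk_coalition (T : finType) (e : rel T) (k : nat) (U W : {set T}) : bool :=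
  [&& [disjoint U & W], ~~ total_kdom e k U, ~~ total_kdom e k W
    & total_kdom e k (U :|: W)].

Definition tk_coalition_partition (T : finType) (e : rel T) (k : nat)
    (P : {set {set T}}) : Prop :=
  partition P [set: T] /\
  forall A, A \in P -> exists2 B, B \in P & tk_coalition e k A B.

(* Main.v *)
Require Import Defs.
From mathcomp Require Import all_boot.
From mathcomp Require Import zify.

Lemma card_as_sum (T : finType) (N B : {set T}) :
  #|N :&: B| = \sum_(x in B) (x \in N).
Proof.
rewrite -sum1_card big_mkcond /= [RHS]big_mkcond /=.
apply: eq_bigr => x _; rewrite inE; by case: (x \in N); case: (x \in B).
Qed.

Lemma arith (m n D k a : nat) :
  m * (k - a) <= n - a -> n <= D -> k <= n -> a < k -> m <= D - k + 1.
Proof.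
move=> H nD kn ak.
apply/negPn/negP; rewrite -ltnNge => Hm.
have H3 : n - a <= D - a by lia.
have H4 : D - k + 2 <= m by lia.
have H2 := leq_trans (leq_mul H4 (leqnn (k - a))) (leq_trans H H3).
nia.
Qed.

Theorem lemma3p3 (T : finType) (e : rel T) (k : nat) (Omega : {set {set T}}) :
  simple_graph e -> connected_graph e ->
  1 <= k -> min_deg_ge e k ->
  tk_coalition_partition e k Omega ->
  (forall P : {set {set T}}, tk_coalition_partition e k P -> #|P| <= #|Omega|) ->
  forall A, A \in Omega ->
    #|[set B in Omega | tk_coalition e k A B]| <= max_deg e - k + 1.
Proof.
move=> _ _ k1 mindeg [partO coal] _ A AO.
set S := [set B in Omega | tk_coalition e k A B].
have [B0 B0O /and4P [_ nA _ _]] := coal A AO.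
move: nA; rewrite /total_kdom negb_forall => /existsP [v]; rewrite -ltnNge => ltA.
set N := nbhd e v.
set a := #|N :&: A|.
have trS : trivIset S.
  apply: trivIsetS (partition_trivIset partO).
  by apply/subsetP => B; rewrite inE => /andP [].
have lowB : forall B, B \in S -> k - a <= #|N :&: B|.
  move=> B; rewrite inE => /andP [_ HB]; case/and4P: HB => dAB _ _ HU.
  move/forallP: HU => /(_ v).
  rewrite setIUr cardsU.
  have -> : N :&: A :&: (N :&: B) = set0.
    apply/setP => x; rewrite !inE; apply/negbTE.
    apply/negP => /andP [/andP [_ xA] /andP [_ xB]].
    by rewrite (disjointFr dAB xA) in xB.
  rewrite cards0 subn0 -/a -/N => HH; lia.
have sumle : \sum_(B in S) #|N :&: B| <= #|N| - a.
  have -> : \sum_(B in S) #|N :&: B| = #|N :&: cover S|.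
    rewrite card_as_sum big_trivIset //.
    by apply: eq_bigr => B _; rewrite card_as_sum.
  rewrite /a -cardsD; apply: subset_leq_card.
  apply/subsetP => x; rewrite !inE => /andP [xN xc]; rewrite xN andbT.
  apply/negP => xA.
  move/bigcupP: xc => [B]; rewrite inE => /andP [_ /and4P [dAB _ _ _]] xB.
  by rewrite (disjointFr dAB xA) in xB.
have msum : #|S| * (k - a) <= \sum_(B in S) #|N :&: B|.
  rewrite -sum_nat_const; exact: leq_sum.
have degv : #|N| <= max_deg e.
  by rewrite /max_deg; exact: (@leq_bigmax _ (fun v => deg e v) v).
have kd : k <= #|N| := mindeg v.
have aN : a <= #|N| by rewrite /a subset_leq_card // subsetIl.
have ak : a < k by [].
move: (leq_trans msum sumle) => H.
exact: (@arith _ _ _ _ _ H degv kd ak).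
Qed.
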